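(* Let $k$ be a field of characteristic $\neq 2$ and let $\mathfrak f$ be the Lie algebra over $k$ generated by $z_0,z_1,z_2$ subject to the relations, for every $i\in\{0,1,2\}$ with indices taken modulo $3$: $[[z_i,z_{i+1}],z_{i+2}]=0$; $[z_i,[z_i,z_{i+1}]]=z_{i+1}+[z_{i+2},z_i]$; $\bigl[[z_{i+1},[z_{i+1},[z_{i+1},z_i]]],[z_{i+1},z_i]\bigr]=0$. Then for any $i,j\in\{0,1,2\}$ (indices modulo $3$): $[(\mathrm{ad}_{z_i})^2(z_j),z_j]=0$; $\bigl[[z_{i-1},z_i],[z_i,z_{i+1}]\bigr]=z_i$; and $(\mathrm{ad}_{[z_i,z_{i+1}]})^3(z_{i+1})=(\mathrm{ad}_{z_{i+1}})^2(z_i)-(\mathrm{ad}_{z_{i+1}})^4(z_i)$. *)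

(* Defs.v *)
From HB Require Import structures.
From mathcomp Require Import all_boot all_order all_algebra.
Set Implicit Arguments. Unset Strict Implicit. Unset Printing Implicit Defensive.
Import GRing.Theory.
Local Open Scope ring_scope.

Definition is_lie_bracket (k : fieldType) (V : lmodType k) (br : V -> V -> V) : Prop :=
  [/\ (forall (a : k) (x y w : V), br (a *: x + y) w = a *: br x w + br y w),
      (forall (a : k) (x y w : V), br w (a *: x + y) = a *: br w x + br w y),
      (forall x : V, br x x = 0)
    & (forall x y w : V, br x (br y w) + br y (br w x) + br w (br x y) = 0)].

Definition ad_pow (V : Type) (br : V -> V -> V) (n : nat) (x y : V) : V :=
  iter n (br x) y.

Definition f_relations (k : fieldType) (V : lmodType k) (br : V -> V -> V)
    (z : 'I_3 -> V) : Prop :=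
  forall i : 'I_3,
    let i1 := ordS i in let i2 := ordS (ordS i) in
    [/\ br (br (z i) (z i1)) (z i2) = 0,
        br (z i) (br (z i) (z i1)) = z i1 + br (z i2) (z i)
      & br (br (z i1) (br (z i1) (br (z i1) (z i)))) (br (z i1) (z i)) = 0].

(* Main.v *)
Require Import Defs.
From HB Require Import structures.
From mathcomp Require Import all_boot all_order all_algebra.
Import GRing.Theory.
Local Open Scope ring_scope.

Lemma brDl {k : fieldType} {V : lmodType k} {br : V -> V -> V} (hbr : is_lie_bracket br) x y w : br (x + y) w = br x w + br y w.
Proof. by move: (hbr); rewrite /is_lie_bracket => -[H _ _ _]; rewrite -[x]scale1r H !scale1r. Qed.
Lemma brDr {k : fieldType} {V : lmodType k} {br : V -> V -> V} (hbr : is_lie_bracket br) x y w : br w (x + y) = br w x + br w y.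
Proof. by move: (hbr); rewrite /is_lie_bracket => -[_ H _ _]; rewrite -[x]scale1r H !scale1r. Qed.
Lemma br0l {k : fieldType} {V : lmodType k} {br : V -> V -> V} (hbr : is_lie_bracket br) w : br 0 w = 0.
Proof. by have := brDl hbr 0 0 w; rewrite addr0 => /esym/eqP; rewrite -subr_eq0 addrK => /eqP. Qed.
Lemma br0r {k : fieldType} {V : lmodType k} {br : V -> V -> V} (hbr : is_lie_bracket br) w : br w 0 = 0.
Proof. by have := brDr hbr 0 0 w; rewrite addr0 => /esym/eqP; rewrite -subr_eq0 addrK => /eqP. Qed.
Lemma brxx {k : fieldType} {V : lmodType k} {br : V -> V -> V} (hbr : is_lie_bracket br) x : br x x = 0.
Proof. by move: (hbr); rewrite /is_lie_bracket => -[_ _ H _]. Qed.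
Lemma brNl {k : fieldType} {V : lmodType k} {br : V -> V -> V} (hbr : is_lie_bracket br) x w : br (- x) w = - br x w.
Proof. by apply/eqP; rewrite -subr_eq0 opprK -(brDl hbr) addNr (br0l hbr). Qed.
Lemma brNr {k : fieldType} {V : lmodType k} {br : V -> V -> V} (hbr : is_lie_bracket br) x w : br w (- x) = - br w x.
Proof. by apply/eqP; rewrite -subr_eq0 opprK -(brDr hbr) addNr (br0r hbr). Qed.
Lemma anti {k : fieldType} {V : lmodType k} {br : V -> V -> V} (hbr : is_lie_bracket br) x y : br x y = - br y x.
Proof.
apply/eqP; rewrite -subr_eq0 opprK.
by have := brxx hbr (x + y); rewrite (brDl hbr) !(brDr hbr) !(brxx hbr) add0r addr0 => ->.
Qed.
Lemma der {k : fieldType} {V : lmodType k} {br : V -> V -> V} (hbr : is_lie_bracket br) u x y : br u (br x y) = br (br u x) y + br x (br u y).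
Proof.
move: (hbr); rewrite /is_lie_bracket => -[_ _ _ J]; have := J u x y.
rewrite (anti hbr y u) (brNr hbr) (anti hbr y (br u x)) => /eqP.
by rewrite -addrA -opprD addr_eq0 opprK addrC => /eqP.
Qed.

Lemma gen {k : fieldType} {V : lmodType k} {br : V -> V -> V} (hbr : is_lie_bracket br) (a b c : V)
 (R1a : br (br a b) c = 0) (R1b : br (br b c) a = 0) (R1c : br (br c a) b = 0)
 (R2a : br a (br a b) = b + br c a) (R2b : br b (br b c) = c + br a b)
 (R3 : br (br b (br b (br b a))) (br b a) = 0) :
 [/\ br (br a (br a b)) b = 0, br (br b (br b a)) a = 0, br (br a b) (br b c) = b &
   br (br a b) (br (br a b) (br (br a b) b)) = br b (br b a) - br b (br b (br b (br b a)))].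
Proof.
have Q1 : br (br a (br a b)) b = 0.
  by rewrite R2a (brDl hbr) (brxx hbr) add0r.
have B : br (br a b) (br b c) = b.
  rewrite (anti hbr (br a b) (br b c)) (der hbr (br b c) a b) R1b (br0l hbr) add0r.
  rewrite (anti hbr (br b c) b) (brNr hbr) R2b (brDr hbr) R2a (anti hbr a c) !opprK.
  by rewrite addrCA addNr addr0.
have F1 : br (br b a) c = 0 by rewrite (anti hbr b a) (brNl hbr) R1a oppr0.
have Fwx : br (br b a) (br b c) = - b by rewrite (anti hbr b a) (brNl hbr) B.
have F2 : br (br b (br b a)) c = b.
  have := der hbr b (br b a) c; rewrite F1 (br0r hbr) Fwx => /eqP.
  by rewrite eq_sym subr_eq0 => /eqP.
have Fby : br b (br c a) = 0 by rewrite (anti hbr b) R1c oppr0.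
have Fw1a : br (br b a) a = b + br c a.
  by rewrite (anti hbr b a) (brNl hbr) -(anti hbr a) R2a.
have F3 : br (br b (br b a)) a = 0.
  have := der hbr b (br b a) a; rewrite Fw1a (brDr hbr) (brxx hbr) Fby (brxx hbr) !addr0.
  by move=> ->.
have F4 : br (br b (br b a)) (br c a) = br b a.
  by rewrite (der hbr (br b (br b a)) c a) F2 F3 (br0r hbr) addr0.
have F5 : br (br b (br b (br b a))) (br c a) = br b (br b a).
  have := der hbr b (br b (br b a)) (br c a); rewrite F4 Fby (br0r hbr) addr0.
  by move/esym.
have F6 : br (br b (br b (br b a))) a = - br (br b (br b a)) (br b a).
  have := der hbr b (br b (br b a)) a; rewrite F3 (br0r hbr) => /eqP.
  by rewrite eq_sym addr_eq0 => /eqP.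
have Fin : br (br (br b (br b a)) (br b a)) (br b a) = br b (br b a) - br b (br b (br b (br b a))).
  have := congr1 (br a) R3; rewrite (br0r hbr) (der hbr a).
  rewrite (anti hbr a (br b (br b (br b a)))) F6 opprK.
  rewrite (anti hbr a (br b a)) Fw1a (brNr hbr) (brDr hbr) F5.
  rewrite (anti hbr (br b (br b (br b a))) b) => /eqP.
  by rewrite subr_eq0 addrC => /eqP.
have Hb : br (br a b) b = br b (br b a).
  by rewrite (anti hbr (br a b) b) (anti hbr a b) (brNr hbr) opprK.
split => //.
rewrite Hb (anti hbr a b) !(brNl hbr) (brNr hbr) opprK -Fin.
by rewrite (anti hbr (br (br b (br b a)) (br b a))) (anti hbr (br b (br b a)) (br b a)) (brNr hbr) opprK.
Qed.
Lemma ordS3 (i : 'I_3) : ordS (ordS (ordS i)) = i.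
Proof. by apply/val_inj; case: i => [[|[|[|?]]] ?]. Qed.
Lemma ordP3 (i : 'I_3) : ord_pred i = ordS (ordS i).
Proof. by apply/val_inj; case: i => [[|[|[|?]]] ?]. Qed.
Lemma cases3 (i j : 'I_3) : [|| j == i, j == ordS i | i == ordS j].
Proof. by case: i j => [[|[|[|?]]] ?] [[|[|[|?]]] ?]. Qed.

Lemma gen_i {k : fieldType} {V : lmodType k} {br : V -> V -> V} (hbr : is_lie_bracket br)
    {z : 'I_3 -> V} (hz : f_relations br z) (i : 'I_3) :
 let a := z i in let b := z (ordS i) in let c := z (ordS (ordS i)) in
 [/\ br (br a (br a b)) b = 0, br (br b (br b a)) a = 0, br (br a b) (br b c) = b &
   br (br a b) (br (br a b) (br (br a b) b)) = br b (br b a) - br b (br b (br b (br b a)))].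
Proof.
move=> a b c.
have [R1a R2a R3] := hz i.
have [R1b R2b _] := hz (ordS i).
have [R1c _ _] := hz (ordS (ordS i)).
rewrite ordS3 in R1b R2b R1c.
exact: (gen hbr _ _ _ R1a R1b R1c R2a R2b R3).
Qed.
Theorem lemma5p1 (k : fieldType) (hk : (2%:R : k) != 0)
    (V : lmodType k) (br : V -> V -> V) (hbr : is_lie_bracket br)
    (z : 'I_3 -> V) (hz : f_relations br z) :
  [/\ (forall i j : 'I_3, br (ad_pow br 2 (z i) (z j)) (z j) = 0),
      (forall i : 'I_3,
         br (br (z (ord_pred i)) (z i)) (br (z i) (z (ordS i))) = z i)
    & (forall i : 'I_3,
         ad_pow br 3 (br (z i) (z (ordS i))) (z (ordS i))
         = ad_pow br 2 (z (ordS i)) (z i) - ad_pow br 4 (z (ordS i)) (z i))].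
Proof.
split.
- move=> i j; rewrite /ad_pow /=.
  case/or3P: (cases3 i j) => /eqP ->.
  + by rewrite (brxx hbr) (br0r hbr) (br0l hbr).
  + by have [-> _ _ _] := gen_i hbr hz i.
  + by have [_ -> _ _] := gen_i hbr hz j.
- move=> i; rewrite ordP3.
  have [_ _ H _] := gen_i hbr hz (ordS (ordS i)).
  by rewrite !ordS3 in H.
- move=> i; rewrite /ad_pow /=.
  by have [_ _ _ ->] := gen_i hbr hz i.
Qed.
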